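(* Assume $\Delta$ is a tight SID all of whose rules are of form (I) or (II), and let $\phi$ be a tight sentence over $\Delta$ (with $\Delta$ containing a rule $\mathsf A_\phi()\leftarrow\phi$). For every $\mathcal T\in\mathcal R(\phi)$ and every configuration $(\alpha,m)$ with $(\alpha,m)\models_\Delta\chi(\mathcal T)$, we have $(\alpha,m)\simeq(\alpha_{\mathcal T},m_{\mathcal T})$.
   Context: Signature $\Sigma=(\{\mathsf C_1..\mathsf C_N\},\mathfrak I,\mathfrak P)$ with pairwise disjoint port sets $\mathfrak P(\mathsf C_i)$, port tuples $\mathfrak P(\mathsf I)$ ($\langle\mathfrak P(\mathsf I)\rangle_k$ the $k$-th, $\mathrm{comp}(p)$ the type owning $p$); behavior map with pairwise disjoint state sets $Q_{\mathsf C_i}$. Architectures $\alpha$: $\alpha(\mathsf C)\subseteq\mathbb U$, $\alpha(\mathsf I)\subseteq\mathbb U^{\#(\mathsf I)}$; a configuration is $(\alpha,m)$ with $m$ a set of places $q[u]$ containing, for each $\mathsf C$ and $u\in\alpha(\mathsf C)$, exactly one $q[u]$ with $q\in Q_{\mathsf C}$. CL formulas $\phi::=\mathsf{emp}\mid\mathsf C(x)\mid\mathsf C^q(x)\mid\mathsf I(\vec x)\mid\mathsf A(\vec x)\mid\phi*\phi\mid\exists x.\phi$, SID rules $\mathsf A(\vec x)\leftarrow\phi$ with $\mathrm{fv}(\phi)=\vec x$; $\models^s_\Delta$ is the least relation where $\mathsf C^q(x)$ denotes the single component $\mathsf C[s(x)]$ with marking $\{q[s(x)]\}$, $\mathsf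 I(\vec x)$ the single interaction $\mathsf I[s(\vec x)]$ with empty marking, $\mathsf{emp}$ the empty configuration, predicate atoms unfold by rules, $*$ is union of configurations with disjoint component sets and interaction relations, $\exists$ chooses a value. Rewriting trees $\mathcal R(\phi)$: finite labellings by rules of $\Delta$ of finite prefix-closed complete subsets of $[1,\kappa]^*$ ($\kappa$ bounds predicate-atom occurrences), root labelled $(\mathsf A(\vec x)\leftarrow\phi)$, a node labelled $(\dots\leftarrow\psi_0)$ having exactly children $1..\mathrm{npred}(\psi_0)$, child $i$ labelled by a rule whose head predicate is that of the $i$-th predicate atom of $\psi_0$. $\chi(\mathcal T)$: the root body with each $i$-th predicate atom $\mathsf A_i(\vec y_i)$ replaced by $\chi(\mathcal T|_i)[\vec x_i/\vec y_i]$, $\mathsf A_i(\vec x_i)$ the head of $\mathcal T(i)$, bound variables renamed apart (quantified at the node whose rule introduces them). Rule forms: (I) $\mathsf A(x_1)\leftarrow\mathsf C^q(x_1)$; (II) $\mathsf A(x_1..x_n)\leftarrow\exists y_1..y_k.\ \varphi*\psi*\mathop{\ast}_{i=1}^p\mathsf A_i(\vec z^i)$, $p\ge1$, $\varphi\in\{\mathsf{emp}\}\cup\{\mathsf C^q(x_1)\}$, $\psi$ a separating conjunction of interaction atoms, each variable of $(\{x_1..x_n\}\setminus\mathrm{fv}(\varphi))\cup\{y_1..y_k\}$ occurring exactly once as argument of the predicate atoms and no other arguments. Canonical model ($\mathbb U=[1,\kappa]^*$): $s^\epsilon_{\mathcal T}(x)=\epsilon$ if $x$ occurs in a component atom of the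 root rule, $s^\epsilon_{\mathcal T}(x)=i\cdot s^\epsilon_{\mathcal T|_i}(x_j)$ if $x$ is the $j$-th argument of the $i$-th predicate atom and $x_j$ the $j$-th head parameter of $\mathcal T(i)$; for $\chi(\mathcal T)=\exists\vec z.\eta$, $s_{\mathcal T}(x)=s^\epsilon_{\mathcal T}(x)$ for free $x$, $=w\cdot s^\epsilon_{\mathcal T|_w}(x)$ for $x$ quantified at $w$; $\alpha_{\mathcal T}(\mathsf C)=\{s_{\mathcal T}(x):\mathsf C^q(x)\in\eta\}$, $\alpha_{\mathcal T}(\mathsf I)=\{s_{\mathcal T}(\vec x):\mathsf I(\vec x)\in\eta\}$, $m_{\mathcal T}=\{q[s_{\mathcal T}(x)]:\mathsf C^q(x)\in\eta\}$. Tightness: a profile $\lambda$ maps predicate symbols of nonzero arity to tuples of component types of matching length; $\phi$ is tight for $\lambda$ if each argument $x_j$ of each interaction atom $\mathsf I(\vec x)$ of $\phi$ occurs in a component atom $\mathsf C^q(x_j)$ of $\phi$ with $\langle\mathfrak P(\mathsf I)\rangle_j\in\mathfrak P(\mathsf C)$ or as the $\ell$-th argument of a predicate atom $\mathsf A$ of $\phi$ with $\langle\mathfrak P(\mathsf I)\rangle_j\in\mathfrak P(\langle\lambda(\mathsf A)\rangle_\ell)$; $\Delta$ is tight if for some $\lambda_\Delta$ every rule body is tight for $\lambda_\Delta$ and each head parameter $x_j$ of $\mathsf A$ occurs in a component atom $\mathsf C^q(x_j)$ with $\mathsf C=\langle\lambda_\Delta(\mathsf A)\rangle_j$ or as the $\ell$-th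 argument of a predicate atom $\mathsf B$ with $\langle\lambda_\Delta(\mathsf B)\rangle_\ell=\langle\lambda_\Delta(\mathsf A)\rangle_j$; a formula is tight if tight for $\lambda_\Delta$. Symmetry: for bijections $\vec f=\langle f_1..f_N\rangle$, $f_i:\mathbb U\to\mathbb U$, $(\vec f(\alpha))(\mathsf C_i)=f_i(\alpha(\mathsf C_i))$, $(\vec f(\alpha))(\mathsf I)=\{\langle f_{i_1}(u_1)..f_{i_k}(u_k)\rangle:\langle u_1..u_k\rangle\in\alpha(\mathsf I)\}$ where $\mathsf C_{i_j}=\mathrm{comp}(\langle\mathfrak P(\mathsf I)\rangle_j)$, and $\vec f(m)=\{q[f_i(u)]:q[u]\in m,\ q\in Q_{\mathsf C_i}\}$. $(\alpha_1,m_1)\simeq(\alpha_2,m_2)$ iff some such $\vec f$ has $\vec f(\alpha_1)=\alpha_2$ and $\vec f(m_1)=m_2$. *)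

(* Defs.v *)
From Stdlib Require Import List Arith PeanoNat.
Import ListNotations.
Set Implicit Arguments.
Unset Strict Implicit.

(* Component types CT, interaction types IT, ports Port with the owner *)
(* map pcomp (this encodes pairwise disjoint port sets P(C)), port      *)
(* tuples iports I (so #(I) = length (iports I)), states State with the *)
(* owner map scomp (pairwise disjoint state sets Q_C), predicate        *)
(* symbols Pred.                                                        *)
Record sig := {
  CT : Type;
  IT : Type;
  Port : Type;
  pcomp : Port -> CT;
  iports : IT -> list Port;
  State : Type;
  scomp : State -> CT;
  Pred : Type
}.

(* The universe used throughout: U = [1,kappa]^* (words over positive
   naturals); we simply take all finite words of naturals. *)
Definition U := list nat.

Section CL.
Variable Sg : sig.

(* Configurations (alpha, m): alpha(C) subset of U, alpha(I) subset of
   U^#(I), m a set of places q[u]. *)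
Record config := {
  cC : CT Sg -> U -> Prop;
  cI : IT Sg -> list U -> Prop;
  cM : State Sg -> U -> Prop
}.

Inductive form (V : Type) : Type :=
| Emp : form V
| Comp : CT Sg -> V -> form V
| CompQ : CT Sg -> State Sg -> V -> form V
| Int : IT Sg -> list V -> form V
| PA : Pred Sg -> list V -> form V
| Sep : form V -> form V -> form V
| Ex : V -> form V -> form V.

Arguments Emp {V}.

Record rule := mkRule { rhead : Pred Sg; rparams : list nat; rbody : form nat }.

Definition upd (V : Type) (d : forall a b : V, {a = b} + {a <> b})
  (s : V -> U) (x : V) (u : U) : V -> U :=
  fun v => if d v x then u else s v.

Definition is_empty (c : config) : Prop :=
  (forall C u, ~ cC c C u) /\ (forall I t, ~ cI c I t) /\ (forall q u, ~ cM c q u).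

Definition disjoint (c1 c2 : config) : Prop :=
  (forall C u, ~ (cC c1 C u /\ cC c2 C u)) /\
  (forall I t, ~ (cI c1 I t /\ cI c2 I t)).

Definition is_union (c c1 c2 : config) : Prop :=
  (forall C u, cC c C u <-> cC c1 C u \/ cC c2 C u) /\
  (forall I t, cI c I t <-> cI c1 I t \/ cI c2 I t) /\
  (forall q u, cM c q u <-> cM c1 q u \/ cM c2 q u).

Inductive sat (D : list rule) : forall (V : Type),
    (forall a b : V, {a = b} + {a <> b}) -> (V -> U) -> config -> form V -> Prop :=
| sat_emp V d s c : is_empty c -> @sat D V d s c Emp
| sat_comp V d s c C x :
    (forall C' u, cC c C' u <-> C' = C /\ u = s x) ->
    (forall I t, ~ cI c I t) -> (forall q u, ~ cM c q u) ->
    @sat D V d s c (Comp C x)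
| sat_compq V d s c C q x :
    (forall C' u, cC c C' u <-> C' = C /\ u = s x) ->
    (forall I t, ~ cI c I t) ->
    (forall q' u, cM c q' u <-> q' = q /\ u = s x) ->
    @sat D V d s c (CompQ C q x)
| sat_int V d s c I xs :
    (forall C u, ~ cC c C u) ->
    (forall I' t, cI c I' t <-> I' = I /\ t = map s xs) ->
    (forall q u, ~ cM c q u) ->
    @sat D V d s c (Int I xs)
| sat_pred V d s c A xs r (s' : nat -> U) :
    In r D -> rhead r = A ->
    map s' (rparams r) = map s xs ->
    @sat D nat Nat.eq_dec s' c (rbody r) ->
    @sat D V d s c (PA A xs)
| sat_sep V d s c c1 c2 f g :
    disjoint c1 c2 -> is_union c c1 c2 ->
    @sat D V d s c1 f -> @sat D V d s c2 g ->
    @sat D V d s c (Sep f g)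
| sat_ex V d s c x f (u : U) :
    @sat D V d (upd d s x u) c f -> @sat D V d s c (Ex x f).

Fixpoint preds (V : Type) (f : form V) : list (Pred Sg * list V) :=
  match f with
  | PA A xs => [(A, xs)]
  | Sep f g => preds f ++ preds g
  | Ex _ f => preds f
  | _ => []
  end.

Fixpoint compatoms (V : Type) (f : form V) : list (CT Sg * State Sg * V) :=
  match f with
  | CompQ C q x => [(C, q, x)]
  | Sep f g => compatoms f ++ compatoms g
  | Ex _ f => compatoms f
  | _ => []
  end.

Fixpoint compvars (V : Type) (f : form V) : list V :=
  match f with
  | Comp _ x => [x]
  | CompQ _ _ x => [x]
  | Sep f g => compvars f ++ compvars g
  | Ex _ f => compvars f
  | _ => []
  end.

Fixpoint intatoms (V : Type) (f : form V) : list (IT Sg * list V) :=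
  match f with
  | Int i xs => [(i, xs)]
  | Sep f g => intatoms f ++ intatoms g
  | Ex _ f => intatoms f
  | _ => []
  end.

Fixpoint fv (f : form nat) : list nat :=
  match f with
  | Emp => []
  | Comp _ x => [x]
  | CompQ _ _ x => [x]
  | Int _ xs => xs
  | PA _ xs => xs
  | Sep f g => fv f ++ fv g
  | Ex x f => remove Nat.eq_dec x (fv f)
  end.

Definition wf_rule (r : rule) : Prop :=
  NoDup (rparams r) /\
  (forall v, In v (fv (rbody r)) <-> In v (rparams r)) /\
  (forall I xs, In (I, xs) (intatoms (rbody r)) -> length xs = length (iports I)) /\
  (forall C q x, In (C, q, x) (compatoms (rbody r)) -> scomp q = C).

Definition wf_SID (D : list rule) : Prop :=
  (forall r, In r D -> wf_rule r) /\
  (forall r1 r2 A ys, In r1 D -> In r2 D -> In (A, ys) (preds (rbody r1)) ->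
     rhead r2 = A -> length ys = length (rparams r2)).

Definition exs (ys : list nat) (f : form nat) : form nat := fold_right (@Ex nat) f ys.

Inductive iconj : form nat -> Prop :=
| iconj_emp : iconj Emp
| iconj_int I xs : iconj (Int I xs)
| iconj_sep f g : iconj f -> iconj g -> iconj (Sep f g).

Inductive pconj : form nat -> Prop :=
| pconj_pa A xs : pconj (PA A xs)
| pconj_sep f g : pconj f -> pconj g -> pconj (Sep f g).

Definition pargs (f : form nat) : list nat := concat (map snd (preds f)).

Definition form_I (r : rule) : Prop :=
  exists C q x, rparams r = [x] /\ rbody r = CompQ C q x /\ scomp q = C.

Definition form_II (r : rule) : Prop :=
  exists (ys : list nat) (phi psi P : form nat),
    rbody r = exs ys (Sep phi (Sep psi P)) /\
    (phi = Emp \/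
     exists C q x1 rest, rparams r = x1 :: rest /\ phi = CompQ C q x1 /\ scomp q = C) /\
    iconj psi /\ pconj P /\
    NoDup (pargs P) /\
    (forall v, In v (pargs P) <->
       ((In v (rparams r) /\ ~ In v (fv phi)) \/ In v ys)).

Definition profile := Pred Sg -> list (CT Sg).

Definition tight_form (lam : profile) (f : form nat) : Prop :=
  forall I xs j x p,
    In (I, xs) (intatoms f) -> nth_error xs j = Some x ->
    nth_error (iports I) j = Some p ->
    (exists C q, In (C, q, x) (compatoms f) /\ pcomp p = C) \/
    (exists A ys l C, In (A, ys) (preds f) /\ nth_error ys l = Some x /\
                      nth_error (lam A) l = Some C /\ pcomp p = C).

Definition tight_SID (D : list rule) (lam : profile) : Prop :=
  (forall r, In r D -> length (lam (rhead r)) = length (rparams r)) /\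
  (forall r, In r D -> tight_form lam (rbody r)) /\
  (forall r j x, In r D -> nth_error (rparams r) j = Some x ->
     exists C, nth_error (lam (rhead r)) j = Some C /\
       ((exists q, In (C, q, x) (compatoms (rbody r))) \/
        (exists B ys l, In (B, ys) (preds (rbody r)) /\ nth_error ys l = Some x /\
                        nth_error (lam B) l = Some C))).

(* Rewriting trees: a node is labelled by a rule, children 1..npred
   (stored as a list, child i at list index i-1). *)
Inductive rtree := Node : rule -> list rtree -> rtree.

Definition label (t : rtree) : rule := match t with Node r _ => r end.

Inductive rtree_ok (D : list rule) : rtree -> Prop :=
| ok_node r ch :
    In r D ->
    length ch = length (preds (rbody r)) ->
    (forall i t A ys, nth_error ch i = Some t -> nth_error (preds (rbody r)) i = Some (A, ys) ->
        rhead (label t) = A) ->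
    (forall t, In t ch -> rtree_ok D t) ->
    rtree_ok D (Node r ch).

(* T in R(phi), for the rule r0 = (A_phi() <- phi) labelling the root *)
Definition in_R (D : list rule) (r0 : rule) (T : rtree) : Prop :=
  rtree_ok D T /\ label T = r0.

(* chi(T).  Variables of chi(T): inl x for a free variable x (head
   parameter of the root), inr (w, y) for the variable y quantified at
   node w (bound variables renamed apart). *)
Definition var' := (nat + (list nat * nat))%type.

Definition vdec : forall a b : var', {a = b} + {a <> b}.
Proof. decide equality; decide equality; [apply Nat.eq_dec | apply list_eq_dec, Nat.eq_dec]. Defined.

Fixpoint lookup (z : nat) (ps : list nat) (vs : list var') : option var' :=
  match ps, vs with
  | p :: ps', v :: vs' => if Nat.eq_dec z p then Some v else lookup z ps' vs'
  | _, _ => None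
  end.

(* instantiate a rule body at node w: rename variables via rho, replace
   the k-th predicate atom (0-based) by F k (renamed arguments). *)
Fixpoint inst (w : list nat) (F : nat -> list var' -> form var')
  (rho : nat -> var') (f : form nat) (k : nat) : form var' * nat :=
  match f with
  | Emp => (Emp, k)
  | Comp C x => (Comp C (rho x), k)
  | CompQ C q x => (CompQ C q (rho x), k)
  | Int i xs => (Int i (map rho xs), k)
  | PA _ xs => (F k (map rho xs), S k)
  | Sep f g =>
      let (f', k1) := inst w F rho f k in
      let (g', k2) := inst w F rho g k1 in (Sep f' g', k2)
  | Ex y f =>
      let (f', k1) := inst w F (fun v => if Nat.eq_dec v y then inr (w, y) else rho v) f k in
      (Ex (inr (w, y)) f', k1)
  end.

Fixpoint chi (t : rtree) : list nat -> (nat -> var') -> form var' :=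
  match t with
  | Node r ch =>
      let info := map (fun c => (rparams (label c), chi c)) ch in
      fun w sigma =>
        let F k args :=
          match nth_error info k with
          | Some (ps, g) =>
              g (w ++ [S k])
                (fun z => match lookup z ps args with
                          | Some v => v | None => inr (w ++ [S k], z) end)
          | None => Emp
          end in
        let rho v := if in_dec Nat.eq_dec v (rparams r) then sigma v else inr (w, v) in
        fst (inst w F rho (rbody r) 0)
  end.

Definition chiT (T : rtree) : form var' := chi T [] inl.

Fixpoint index_of (x : nat) (ys : list nat) : nat :=
  match ys with
  | [] => 0
  | y :: ys' => if Nat.eq_dec x y then 0 else S (index_of x ys')
  end.

Fixpoint find_arg (x : nat) (l : list (Pred Sg * list nat)) : option (nat * nat) :=
  match l with
  | [] => None
  | (_, ys) :: l' =>
      if in_dec Nat.eq_dec x ys then Some (0, index_of x ys)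
      else match find_arg x l' with Some (i, j) => Some (S i, j) | None => None end
  end.

Fixpoint seps (t : rtree) : nat -> U :=
  match t with
  | Node r ch =>
      let info := map (fun c => (rparams (label c), seps c)) ch in
      fun x =>
        if in_dec Nat.eq_dec x (compvars (rbody r)) then []
        else match find_arg x (preds (rbody r)) with
             | Some (i, j) =>
                 match nth_error info i with
                 | Some (ps, g) => S i :: g (nth j ps 0)
                 | None => []
                 end
             | None => []
             end
  end.

(* subtree T|_w, positions 1-based *)
Fixpoint subtree (t : rtree) (w : list nat) : option rtree :=
  match w with
  | [] => Some t
  | i :: w' =>
      match t with
      | Node _ ch =>
          match i with
          | 0 => None
          | S i' => match nth_error ch i' with Some c => subtree c w' | None => None end
          end
      end
  end.

Definition sT (T : rtree) (v : var') : U :=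
  match v with
  | inl x => seps T x
  | inr (w, y) => match subtree T w with Some t => w ++ seps t y | None => [] end
  end.

Definition canon (T : rtree) : config := {|
  cC := fun C u => exists q v, In (C, q, v) (compatoms (chiT T)) /\ sT T v = u;
  cI := fun I t => exists vs, In (I, vs) (intatoms (chiT T)) /\ map (sT T) vs = t;
  cM := fun q u => exists C v, In (C, q, v) (compatoms (chiT T)) /\ sT T v = u
|}.

Definition bij_family (f : CT Sg -> U -> U) : Prop :=
  forall C, exists g : U -> U, (forall u, g (f C u) = u) /\ (forall u, f C (g u) = u).

Fixpoint map_tuple (f : CT Sg -> U -> U) (ps : list (Port Sg)) (t : list U) : list U :=
  match ps, t with
  | p :: ps', u :: t' => f (pcomp p) u :: map_tuple f ps' t'
  | _, _ => []
  end.

Definition symmetric (c1 c2 : config) : Prop :=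
  exists f : CT Sg -> U -> U, bij_family f /\
    (forall C u, cC c2 C u <-> exists v, cC c1 C v /\ f C v = u) /\
    (forall I t, cI c2 I t <-> exists t', cI c1 I t' /\ map_tuple f (iports I) t' = t) /\
    (forall q u, cM c2 q u <-> exists v, cM c1 q v /\ f (scomp q) v = u).

End CL.

Arguments Emp {Sg V}.

(* Main.v *)
Require Import Defs.
From Stdlib Require Import List Arith PeanoNat Classical FunctionalExtensionality Lia ClassicalEpsilon.
Import ListNotations.
Set Implicit Arguments.


Section Gen.
Variable S : sig.

Fixpoint avars (V : Type) (f : form S V) : list V :=
  match f with
  | Emp => []
  | Comp _ x => [x]
  | CompQ _ _ x => [x]
  | Int _ xs => xs
  | PA _ xs => xs
  | Sep a b => avars a ++ avars b
  | Ex _ a => avars a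
  end.

Fixpoint bvs (V : Type) (f : form S V) : list V :=
  match f with
  | Sep a b => bvs a ++ bvs b
  | Ex y a => y :: bvs a
  | _ => []
  end.

Fixpoint okF (V : Type) (f : form S V) : Prop :=
  match f with
  | Emp => True
  | Comp _ _ => False
  | CompQ _ _ _ => True
  | Int _ _ => True
  | PA _ _ => False
  | Sep a b => okF a /\ okF b /\ (forall v, In v (avars a) -> ~ In v (bvs b)) /\
               (forall v, In v (avars b) -> ~ In v (bvs a))
  | Ex _ a => okF a
  end.

Lemma catoms_avars V (f : form S V) C q v : In (C,q,v) (compatoms f) -> In v (avars f).
Proof.
  induction f; simpl; intros H; try tauto.
  - destruct H as [H|[]]; inversion H; auto.
  - apply in_app_or in H; apply in_or_app; tauto.
Qed.

Lemma iatoms_avars V (f : form S V) I vs v : In (I,vs) (intatoms f) -> In v vs -> In v (avars f).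
Proof.
  induction f; simpl; intros H Hv; try tauto.
  - destruct H as [H|[]]; inversion H; subst; auto.
  - apply in_app_or in H; apply in_or_app; firstorder.
Qed.

Definition Desc (c : config S) V (F : form S V) (g : V -> U) : Prop :=
  (forall C u, cC c C u <-> exists q v, In (C,q,v) (compatoms F) /\ g v = u) /\
  (forall I t, cI c I t <-> exists vs, In (I,vs) (intatoms F) /\ map g vs = t) /\
  (forall q u, cM c q u <-> exists C v, In (C,q,v) (compatoms F) /\ g v = u) /\
  (forall C q v q' v', In (C,q,v) (compatoms F) -> In (C,q',v') (compatoms F) ->
      g v = g v' -> v = v').

Lemma sat_desc (D : list (rule S)) V d s c (F : form S V) :
  sat D d s c F -> okF F ->
  exists g, (forall v, ~ In v (bvs F) -> g v = s v) /\ Desc c F g.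
Proof.
  induction 1; simpl; intros Hok.
  - exists s; split; auto. destruct H as (H1 & H2 & H3).
    split; [|split; [|split]]; simpl.
    + intros C u; split; [intros h; exfalso; eapply H1; eauto| intros (q & v & [] & _)].
    + intros I t; split; [intros h; exfalso; eapply H2; eauto| intros (vs & [] & _)].
    + intros q u; split; [intros h; exfalso; eapply H3; eauto| intros (C & v & [] & _)].
    + intros; contradiction.
  - contradiction.
  - exists s; split; auto. split; [|split; [|split]]; simpl.
    + intros C0 u; split.
      * intros Hc. apply H in Hc. destruct Hc; subst. eauto.
      * intros (q0 & v & [E|[]] & E2). inversion E; subst. apply H; auto.
    + intros I t; split.
      * intros Hc; exfalso; eapply H0; eauto.
      * intros [vs [[] _]].
    + intros q0 u; split.
      * intros Hc. apply H1 in Hc. destruct Hc; subst. eauto.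
      * intros (C0 & v & [E|[]] & E2). inversion E; subst. apply H1; auto.
    + intros C0 q1 v q' v' [E|[]] [E'|[]] _. inversion E; inversion E'; subst; auto.
  - exists s; split; auto. split; [|split; [|split]]; simpl.
    + intros C0 u; split.
      * intros Hc; exfalso; eapply H; eauto.
      * intros (q0 & v & [] & _).
    + intros I' t; split.
      * intros Hc. apply H0 in Hc. destruct Hc; subst. eauto.
      * intros (vs & [E|[]] & E2). inversion E; subst. apply H0; auto.
    + intros q0 u; split.
      * intros Hc; exfalso; eapply H1; eauto.
      * intros (C0 & v & [] & _).
    + intros; contradiction.
  - contradiction.
  - destruct Hok as (Hf & Hg & Hfg & Hgf).
    destruct (IHsat1 Hf) as (g1 & Hg1 & D1). destruct (IHsat2 Hg) as (g2 & Hg2 & D2).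
    set (gg := fun v => if in_dec d v (bvs f) then g1 v else g2 v).
    assert (E1 : forall v, In v (avars f) -> gg v = g1 v).
    { intros v Hv. unfold gg. destruct (in_dec d v (bvs f)); auto.
      rewrite Hg1 by auto. apply Hg2. apply Hfg; auto. }
    assert (E2 : forall v, In v (avars g) -> gg v = g2 v).
    { intros v Hv. unfold gg. destruct (in_dec d v (bvs f)); auto.
      exfalso; eapply Hgf; eauto. }
    exists gg; split.
    { intros v Hv. unfold gg. destruct (in_dec d v (bvs f)).
      - exfalso; apply Hv; apply in_or_app; auto.
      - apply Hg2. intro; apply Hv; apply in_or_app; auto. }
    destruct D1 as (C1 & I1 & M1 & J1). destruct D2 as (C2 & I2 & M2 & J2).
    destruct H as [HdC HdI]. destruct H0 as (UC & UI & UM).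
    split; [|split; [|split]].
    + intros C u; split; intros H.
    ++ apply UC in H. destruct H as [H|H].
      * apply C1 in H. destruct H as (q & v & Hin & <-). exists q, v. split.
        apply in_or_app; auto. apply E1. eapply catoms_avars; eauto.
      * apply C2 in H. destruct H as (q & v & Hin & <-). exists q, v. split.
        apply in_or_app; auto. apply E2. eapply catoms_avars; eauto.
    ++ apply UC. destruct H as (q & v & Hin & <-). apply in_app_or in Hin. destruct Hin.
      * left. apply C1. exists q, v. split; auto. symmetry; apply E1. eapply catoms_avars; eauto.
      * right. apply C2. exists q, v. split; auto. symmetry; apply E2. eapply catoms_avars; eauto.
    + intros I t; split; intros H.
    ++ apply UI in H. destruct H as [H|H].
      * apply I1 in H. destruct H as (vs & Hin & <-). exists vs. split.
        apply in_or_app; auto. apply map_ext_in. intros; apply E1. eapply iatoms_avars; eauto.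
      * apply I2 in H. destruct H as (vs & Hin & <-). exists vs. split.
        apply in_or_app; auto. apply map_ext_in. intros; apply E2. eapply iatoms_avars; eauto.
    ++ apply UI. destruct H as (vs & Hin & <-). apply in_app_or in Hin. destruct Hin.
      * left. apply I1. exists vs. split; auto. apply map_ext_in. intros; symmetry; apply E1. eapply iatoms_avars; eauto.
      * right. apply I2. exists vs. split; auto. apply map_ext_in. intros; symmetry; apply E2. eapply iatoms_avars; eauto.
    + intros q u; split; intros H.
    ++ apply UM in H. destruct H as [H|H].
      * apply M1 in H. destruct H as (C & v & Hin & <-). exists C, v. split.
        apply in_or_app; auto. apply E1. eapply catoms_avars; eauto.
      * apply M2 in H. destruct H as (C & v & Hin & <-). exists C, v. split.
        apply in_or_app; auto. apply E2. eapply catoms_avars; eauto.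
    ++ apply UM. destruct H as (C & v & Hin & <-). apply in_app_or in Hin. destruct Hin.
      * left. apply M1. exists C, v. split; auto. symmetry; apply E1. eapply catoms_avars; eauto.
      * right. apply M2. exists C, v. split; auto. symmetry; apply E2. eapply catoms_avars; eauto.
    + intros C q v q' v' H H0 Hgv. apply in_app_or in H. apply in_app_or in H0.
      destruct H as [H|H]; destruct H0 as [H0|H0].
      * rewrite (E1 v) in Hgv by (eapply catoms_avars; eauto).
        rewrite (E1 v') in Hgv by (eapply catoms_avars; eauto). eauto.
      * rewrite (E1 v) in Hgv by (eapply catoms_avars; eauto).
        rewrite (E2 v') in Hgv by (eapply catoms_avars; eauto).
        exfalso. apply (HdC C (g1 v)). split.
        apply C1; eauto. apply C2. rewrite Hgv. eauto.
      * rewrite (E2 v) in Hgv by (eapply catoms_avars; eauto).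
        rewrite (E1 v') in Hgv by (eapply catoms_avars; eauto).
        exfalso. apply (HdC C (g1 v')). split.
        apply C1; eauto. apply C2. rewrite <- Hgv. eauto.
      * rewrite (E2 v) in Hgv by (eapply catoms_avars; eauto).
        rewrite (E2 v') in Hgv by (eapply catoms_avars; eauto). eauto.
  - destruct (IHsat Hok) as (g & Hg & Dg). exists g; split; auto.
    intros v Hv. rewrite Hg by (intro; apply Hv; auto). unfold upd.
    destruct (d v x); auto. subst; exfalso; apply Hv; auto.
Qed.

End Gen.


Definition ueq := list_eq_dec Nat.eq_dec.
Definition swp (a b u : U) : U :=
  if ueq u a then b else if ueq u b then a else u.

Lemma swp_inv a b u : swp a b (swp a b u) = u.
Proof.
  unfold swp. destruct (ueq u a).
  - destruct (ueq b a); subst; auto. destruct (ueq b b); congruence.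
  - destruct (ueq u b).
    + destruct (ueq a a); congruence.
    + destruct (ueq u a); try congruence. destruct (ueq u b); congruence.
Qed.

Lemma ext_bij (A : Type) (L : list A) (P : A -> Prop) (fa fb : A -> U) :
  (forall x y, In x L -> In y L -> P x -> P y -> (fa x = fa y <-> fb x = fb y)) ->
  exists h hi : U -> U, (forall u, hi (h u) = u) /\ (forall u, h (hi u) = u) /\
    (forall x, In x L -> P x -> h (fa x) = fb x).
Proof.
  induction L as [|a L IH]; intros Hc.
  - exists (fun u => u), (fun u => u). repeat split; auto. intros x [].
  - destruct IH as (h & hi & H1 & H2 & H3).
    { intros; apply Hc; simpl; auto. }
    destruct (classic (P a)) as [Pa|nPa].
    2:{ exists h, hi. repeat split; auto. intros x [<-|Hx] Px; auto; contradiction. }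
    destruct (classic (exists y, In y L /\ P y /\ fa y = fa a)) as [(y & Hy & Py & Ey)|Hne].
    + exists h, hi. repeat split; auto. intros x [E|Hx] Px; auto. subst x.
      rewrite <- Ey, H3 by auto. apply (Hc y a); simpl; auto.
    + set (z := h (fa a)).
      exists (fun u => swp z (fb a) (h u)) , (fun u => hi (swp z (fb a) u)).
      repeat split.
      * intros u. rewrite swp_inv. auto.
      * intros u. rewrite H2. apply swp_inv.
      * intros x [E|Hx] Px.
        -- subst x. unfold swp. fold z. destruct (ueq z z); congruence.
        -- rewrite H3 by auto. unfold swp.
           assert (N1 : fb x <> fb a).
           { intro E. apply Hne. exists x; split; auto. split; auto.
             apply (Hc x a); simpl; auto. }
           assert (N2 : fb x <> z).
           { intro E. apply Hne. exists x; split; auto. split; auto.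
             rewrite <- H3 in E by auto. unfold z in E.
             rewrite <- (H1 (fa x)), E. auto. }
           destruct (ueq (fb x) z); try congruence. destruct (ueq (fb x) (fb a)); congruence.
Qed.


Section Inst.
Variable S : sig.

Lemma inst_sep w F rho (f g : form S nat) k :
  inst w F rho (Sep f g) k =
  (Sep (fst (inst w F rho f k)) (fst (inst w F rho g (snd (inst w F rho f k)))),
   snd (inst w F rho g (snd (inst w F rho f k)))).
Proof. simpl. destruct (inst w F rho f k). simpl. destruct (inst w F rho g n). reflexivity. Qed.

Lemma inst_pconj_col (X : Type) (col : form S var' -> list X)
  (Hcol : forall a b, col (Sep a b) = col a ++ col b) w F (P : form S nat) (HP : pconj P) :
  forall rho k, snd (inst w F rho P k) = k + length (preds P) /\
  (forall x, In x (col (fst (inst w F rho P k))) <->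
     exists i A xs, nth_error (preds P) i = Some (A,xs) /\ In x (col (F (k+i) (map rho xs)))).
Proof.
  induction HP; intros rho k.
  - simpl. split; [lia|]. intros x; split.
    + intros H. exists 0, A, xs. rewrite Nat.add_0_r. auto.
    + intros (i & A' & xs' & Hi & Hx). destruct i as [|i]; simpl in Hi.
      * inversion Hi; subst. rewrite Nat.add_0_r in Hx. auto.
      * destruct i; discriminate.
  - rewrite inst_sep. simpl fst; simpl snd.
    destruct (IHHP1 rho k) as [E1 H1].
    destruct (IHHP2 rho (snd (inst w F rho f k))) as [E2 H2].
    simpl preds. rewrite length_app. split; [rewrite E2, E1; lia|].
    intros x. rewrite Hcol. split.
    + intros H. apply in_app_or in H. destruct H as [H|H].
      * apply H1 in H. destruct H as (i & A & xs & Hi & Hx). exists i, A, xs.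
        split; auto. rewrite nth_error_app1; auto. apply nth_error_Some; congruence.
      * apply H2 in H. destruct H as (i & A & xs & Hi & Hx). exists (length (preds f) + i), A, xs.
        split. rewrite nth_error_app2 by lia. replace (length (preds f) + i - length (preds f)) with i by lia. auto.
        rewrite E1 in Hx. replace (k + (length (preds f) + i)) with (k + length (preds f) + i) by lia. auto.
    + intros (i & A & xs & Hi & Hx). apply in_or_app.
      destruct (Nat.lt_ge_cases i (length (preds f))).
      * left. apply H1. exists i, A, xs. rewrite nth_error_app1 in Hi; auto.
      * right. apply H2. rewrite E1. exists (i - length (preds f)), A, xs.
        rewrite nth_error_app2 in Hi by lia. split; auto.
        replace (k + length (preds f) + (i - length (preds f))) with (k + i) by lia. auto.
Qed.

Lemma inst_pconj_ok w F (P : form S nat) (HP : pconj P) :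
  forall rho k,
  (forall i A xs, nth_error (preds P) i = Some (A,xs) -> okF (F (k+i) (map rho xs))) ->
  (forall i A xs i' A' xs' v, i <> i' -> nth_error (preds P) i = Some (A,xs) ->
     nth_error (preds P) i' = Some (A',xs') -> In v (avars (F (k+i) (map rho xs))) ->
     ~ In v (bvs (F (k+i') (map rho xs')))) ->
  okF (fst (inst w F rho P k)).
Proof.
  induction HP; intros rho k Hok Hd.
  - simpl. specialize (Hok 0 A xs eq_refl). rewrite Nat.add_0_r in Hok. auto.
  - rewrite inst_sep. simpl fst.
    destruct (inst_pconj_col (@avars S var') (fun a b => eq_refl) w F HP1 rho k) as [E1 A1].
    destruct (inst_pconj_col (@bvs S var') (fun a b => eq_refl) w F HP1 rho k) as [_ B1].
    destruct (inst_pconj_col (@avars S var') (fun a b => eq_refl) w F HP2 rho (snd (inst w F rho f k))) as [_ A2].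
    destruct (inst_pconj_col (@bvs S var') (fun a b => eq_refl) w F HP2 rho (snd (inst w F rho f k))) as [_ B2].
    rewrite E1 in A2, B2 |- *. simpl preds in Hok, Hd.
    assert (L1 : forall i A xs, nth_error (preds f) i = Some (A,xs) -> nth_error (preds f ++ preds g) i = Some (A,xs)).
    { intros i A xs H. rewrite nth_error_app1; auto. apply nth_error_Some; congruence. }
    assert (L2 : forall i A xs, nth_error (preds g) i = Some (A,xs) -> nth_error (preds f ++ preds g) (length (preds f) + i) = Some (A,xs)).
    { intros i A xs H. rewrite nth_error_app2 by lia. replace (length (preds f) + i - length (preds f)) with i by lia. auto. }
    assert (Ri : forall i, k + length (preds f) + i = k + (length (preds f) + i)) by (intros; lia).
    split; [|split; [|split]].
    + apply IHHP1. intros; eauto. intros; eapply Hd; eauto.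
    + apply IHHP2.
      * intros i A xs H. rewrite Ri. eauto.
      * intros i A xs i' A' xs' v Hne H H' Hv. rewrite Ri in Hv. rewrite (Ri i'). apply (Hd (length (preds f) + i) A xs (length (preds f) + i') A' xs' v); auto. lia.
    + intros v Hv Hb. apply A1 in Hv. apply B2 in Hb.
      destruct Hv as (i & A & xs & Hi & Hv). destruct Hb as (i' & A' & xs' & Hi' & Hb).
      rewrite Ri in Hb. eapply Hd; [| | |exact Hv|exact Hb]; eauto.
      assert (i < length (preds f)) by (apply nth_error_Some; congruence). lia.
    + intros v Hv Hb. apply A2 in Hv. apply B1 in Hb.
      destruct Hv as (i & A & xs & Hi & Hv). destruct Hb as (i' & A' & xs' & Hi' & Hb).
      rewrite Ri in Hv. eapply Hd; [| | |exact Hv|exact Hb]; eauto.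
      assert (i' < length (preds f)) by (apply nth_error_Some; congruence). lia.
Qed.

Inductive iconjV : form S var' -> Prop :=
| iv_emp : iconjV Emp
| iv_int I xs : iconjV (Int I xs)
| iv_sep f g : iconjV f -> iconjV g -> iconjV (Sep f g).

Lemma inst_iconj w F (psi : form S nat) (H : iconj psi) : forall rho k,
  snd (inst w F rho psi k) = k /\ compatoms (fst (inst w F rho psi k)) = [] /\
  bvs (fst (inst w F rho psi k)) = [] /\ okF (fst (inst w F rho psi k)) /\
  (forall a, In a (intatoms (fst (inst w F rho psi k))) <->
     exists I xs, In (I,xs) (intatoms psi) /\ a = (I, map rho xs)) /\
  (forall v, In v (avars (fst (inst w F rho psi k))) -> exists x, v = rho x).
Proof.
  induction H; intros rho k.
  - simpl. repeat split; auto; try tauto. intros (I & xs & [] & _).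
  - simpl. repeat split; auto.
    + intros [<-|[]]. eauto.
    + intros (I' & xs' & [E|[]] & ->). inversion E; auto.
    + intros v Hv. apply in_map_iff in Hv. destruct Hv as (x & <- & _); eauto.
  - rewrite inst_sep. simpl fst; simpl snd.
    destruct (IHiconj1 rho k) as (E1 & C1 & B1 & O1 & I1 & V1).
    rewrite E1. destruct (IHiconj2 rho k) as (E2 & C2 & B2 & O2 & I2 & V2).
    simpl. rewrite C1, C2, B1, B2. repeat split; auto.
    + intros Ha. apply in_app_or in Ha. destruct Ha as [Ha|Ha].
      * apply I1 in Ha. destruct Ha as (I & xs & ? & ?). exists I, xs. split; auto. apply in_or_app; auto.
      * apply I2 in Ha. destruct Ha as (I & xs & ? & ?). exists I, xs. split; auto. apply in_or_app; auto.
    + intros (I & xs & Hin & ->). apply in_app_or in Hin. apply in_or_app. destruct Hin.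
      * left. apply I1. eauto.
      * right. apply I2. eauto.
    + intros v Hv. apply in_app_or in Hv. destruct Hv; eauto.
Qed.

Fixpoint exsV (w : list nat) (ys : list nat) (f : form S var') : form S var' :=
  match ys with [] => f | y :: ys' => Ex (inr (w,y)) (exsV w ys' f) end.

Definition rhoW (w : list nat) (ys : list nat) (rho : nat -> var') : nat -> var' :=
  fun v => if in_dec Nat.eq_dec v ys then inr (w,v) else rho v.

Lemma inst_exs w F ys (X : form S nat) : forall rho k,
  inst w F rho (exs ys X) k =
  (exsV w ys (fst (inst w F (rhoW w ys rho) X k)), snd (inst w F (rhoW w ys rho) X k)).
Proof.
  induction ys as [|y ys IH]; intros rho k.
  - simpl. unfold rhoW. simpl. destruct (inst w F rho X k); reflexivity.
  - simpl exs. simpl inst. rewrite IH. simpl.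
    replace (rhoW w ys (fun v : nat => if Nat.eq_dec v y then inr (w, y) else rho v))
      with (rhoW w (y :: ys) rho). reflexivity.
    apply functional_extensionality. intros v. unfold rhoW. simpl.
    destruct (Nat.eq_dec y v); destruct (in_dec Nat.eq_dec v ys); destruct (Nat.eq_dec v y);
      subst; try congruence.
Qed.

Lemma exsV_catoms w ys f : compatoms (exsV w ys f) = compatoms f.
Proof. induction ys; simpl; auto. Qed.
Lemma exsV_iatoms w ys f : intatoms (exsV w ys f) = intatoms f.
Proof. induction ys; simpl; auto. Qed.
Lemma exsV_avars w ys f : avars (exsV w ys f) = avars f.
Proof. induction ys; simpl; auto. Qed.
Lemma exsV_bvs w ys f : bvs (exsV w ys f) = map (fun y => inr (w,y)) ys ++ bvs f.
Proof. induction ys; simpl; auto. f_equal; auto. Qed.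
Lemma exsV_ok w ys f : okF (exsV w ys f) <-> okF f.
Proof. induction ys; simpl; tauto. Qed.

Lemma exs_preds ys (X : form S nat) : preds (exs ys X) = preds X.
Proof. induction ys; simpl; auto. Qed.
Lemma exs_catoms ys (X : form S nat) : compatoms (exs ys X) = compatoms X.
Proof. induction ys; simpl; auto. Qed.
Lemma exs_iatoms ys (X : form S nat) : intatoms (exs ys X) = intatoms X.
Proof. induction ys; simpl; auto. Qed.
Lemma exs_cvars ys (X : form S nat) : compvars (exs ys X) = compvars X.
Proof. induction ys; simpl; auto. Qed.
Lemma exs_fv ys (X : form S nat) v : In v (fv (exs ys X)) -> ~ In v ys.
Proof.
  induction ys; simpl; intros H; auto.
  apply in_remove in H. destruct H as [H1 H2]. intros [E|E]; [congruence|]. apply IHys; auto.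
Qed.

End Inst.


Section Tree.
Variable S : sig.

Definition sigK (ps : list nat) (w : list nat) (k : nat) (args : list var') : nat -> var' :=
  fun z => match lookup z ps args with Some v => v | None => inr (w ++ [Datatypes.S k], z) end.

Definition FF (ch : list (rtree S)) (w : list nat) : nat -> list var' -> form S var' :=
  fun k args => match nth_error (map (fun c => (rparams (label c), chi c)) ch) k with
   | Some (ps, g) => g (w ++ [Datatypes.S k]) (sigK ps w k args)
   | None => Emp end.

Definition rhoF (r : rule S) (w : list nat) (sigma : nat -> var') : nat -> var' :=
  fun v => if in_dec Nat.eq_dec v (rparams r) then sigma v else inr (w, v).

Lemma chi_unfold r ch w sigma :
  chi (Node r ch) w sigma = fst (inst w (FF ch w) (rhoF r w sigma) (rbody r) 0).
Proof. reflexivity. Qed.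

Lemma FF_nth ch w k c args : nth_error ch k = Some c ->
  FF ch w k args = chi c (w ++ [Datatypes.S k]) (sigK (rparams (label c)) w k args).
Proof. intros H. unfold FF. rewrite nth_error_map, H. reflexivity. Qed.

Lemma seps_unfold r ch x :
  seps (Node r ch) x =
  if in_dec Nat.eq_dec x (compvars (rbody r)) then []
  else match find_arg x (preds (rbody r)) with
       | Some (i, j) => match nth_error ch i with
                        | Some c => Datatypes.S i :: seps c (nth j (rparams (@label S c)) 0)
                        | None => [] end
       | None => [] end.
Proof.
  simpl. destruct (in_dec Nat.eq_dec x (compvars (rbody r))); auto.
  destruct (find_arg x (preds (rbody r))) as [[i j]|]; auto.
  rewrite nth_error_map. destruct (nth_error ch i); reflexivity.
Qed.

End Tree.


Section Aux.
Variable S : sig.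

Lemma lookup_nth (ps : list nat) (args : list var') : NoDup ps -> length args = length ps ->
  forall j z, nth_error ps j = Some z -> lookup z ps args = nth_error args j.
Proof.
  revert args. induction ps as [|p ps IH]; intros args Hnd Hl j z Hj.
  - destruct j; discriminate.
  - destruct args as [|a args]; [discriminate|]. inversion Hnd; subst. simpl in Hl.
    destruct j as [|j]; simpl in Hj |- *.
    + inversion Hj; subst. destruct (Nat.eq_dec z z); congruence.
    + destruct (Nat.eq_dec z p).
      * subst. exfalso. apply H1. eapply nth_error_In; eauto.
      * apply IH; auto.
Qed.

Lemma index_of_nth (xs : list nat) : NoDup xs -> forall j x, nth_error xs j = Some x -> index_of x xs = j.
Proof.
  induction xs as [|y xs IH]; intros Hnd j x Hj.
  - destruct j; discriminate.
  - inversion Hnd; subst. destruct j as [|j]; simpl in Hj |- *.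
    + inversion Hj; subst. destruct (Nat.eq_dec x x); congruence.
    + destruct (Nat.eq_dec x y).
      * subst. exfalso. apply H1. eapply nth_error_In; eauto.
      * f_equal. apply IH; auto.
Qed.

Lemma NoDup_app_disj (A : Type) (l1 l2 : list A) a : NoDup (l1 ++ l2) -> In a l1 -> In a l2 -> False.
Proof.
  induction l1 as [|b l1 IH]; simpl; intros H H1 H2; auto.
  inversion H as [|b' l' Hn Hnd]; subst. destruct H1 as [<-|H1]; eauto.
  apply Hn. apply in_or_app; auto.
Qed.

Lemma find_arg_nth (l : list (Pred S * list nat)) : NoDup (concat (map snd l)) ->
  forall i A xs j x, nth_error l i = Some (A,xs) -> nth_error xs j = Some x -> find_arg x l = Some (i,j).
Proof.
  induction l as [|[B ys] l IH]; intros Hnd i A xs j x Hi Hj.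
  - destruct i; discriminate.
  - simpl in Hnd. destruct i as [|i]; simpl in Hi |- *.
    + inversion Hi; subst. destruct (in_dec Nat.eq_dec x xs) as [_|n].
      * f_equal. f_equal. eapply index_of_nth; eauto. eapply NoDup_app_remove_r; eauto.
      * exfalso. apply n. eapply nth_error_In; eauto.
    + destruct (in_dec Nat.eq_dec x ys) as [Hin|_].
      * exfalso. assert (In x (concat (map snd l))).
        { apply in_concat. exists xs. split. apply in_map_iff. exists (A,xs). split; auto.
          eapply nth_error_In; eauto. eapply nth_error_In; eauto. }
        eapply NoDup_app_disj; eauto.
      * rewrite (IH (NoDup_app_remove_l _ _ Hnd) i A xs j x Hi Hj). auto.
Qed.

Lemma subtree_app (T : rtree S) w : forall w' t, subtree T w = Some t -> subtree T (w ++ w') = subtree t w'.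
Proof.
  revert T. induction w as [|a w IH]; intros T w' t H.
  - simpl in H. inversion H; subst. reflexivity.
  - destruct T as [r ch]. simpl in H |- *. destruct a; [discriminate|].
    destruct (nth_error ch a); [|discriminate]. apply IH; auto.
Qed.

End Aux.


Section Main.
Variable S : sig.
Variable D : list (rule S).
Variable lam : profile S.
Variable T : rtree S.
Hypothesis HwfD : wf_SID D.
Hypothesis HtD : tight_SID D lam.
Hypothesis Hforms : forall r, In r D -> form_I r \/ form_II r.

Definition Below (w : list nat) (v : var') : Prop := exists i p y, v = inr (w ++ i :: p, y).
Definition AtOrBelow (w : list nat) (v : var') : Prop := exists p y, v = inr (w ++ p, y).

Definition NodeProps (t : rtree S) (w : list nat) (sigma : nat -> var') : Prop :=
  let F := chi t w sigma in
  okF F /\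
  (forall C q v, In (C,q,v) (compatoms F) -> scomp q = C) /\
  (forall C q v, In (C,q,v) (compatoms F) -> exists p, sT T v = w ++ p) /\
  (forall C q v C' q' v', In (C,q,v) (compatoms F) -> In (C',q',v') (compatoms F) ->
      sT T v = sT T v' -> v = v') /\
  (forall I vs, In (I,vs) (intatoms F) -> length vs = length (iports I) /\
      forall j v p, nth_error vs j = Some v -> nth_error (iports I) j = Some p ->
        exists q, In (pcomp p, q, v) (compatoms F)) /\
  (forall l z C, nth_error (rparams (label t)) l = Some z ->
      nth_error (lam (rhead (label t))) l = Some C -> exists q, In (C,q,sigma z) (compatoms F)) /\
  (forall v, In v (avars F) -> (exists x, In x (rparams (label t)) /\ v = sigma x) \/ AtOrBelow w v) /\
  (forall v, In v (bvs F) -> AtOrBelow w v).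

Fixpoint rtree_ind' (P : rtree S -> Prop)
  (H : forall r ch, (forall c, In c ch -> P c) -> P (Node r ch)) (t : rtree S) : P t :=
  match t with
  | Node r ch => H r ch ((fix go (l : list (rtree S)) : forall c, In c l -> P c :=
       match l as l0 return forall c, In c l0 -> P c with
       | [] => fun c Hc => False_ind _ Hc
       | c' :: l' => fun c Hc => match Hc with
                                 | or_introl e => eq_ind c' P (rtree_ind' P H c') c e
                                 | or_intror h => go l' c h end
       end) ch)
  end.

Lemma below_ext w i v : Below (w ++ [i]) v -> Below w v.
Proof. intros (i' & p & y & ->). exists i, (i' :: p), y. rewrite <- app_assoc. reflexivity. Qed.

Lemma atorbelow_below w i v : AtOrBelow (w ++ [i]) v -> Below w v.
Proof. intros (p & y & ->). exists i, p, y. rewrite <- app_assoc. reflexivity. Qed.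

Lemma atorbelow_ext w i v : AtOrBelow (w ++ [i]) v -> AtOrBelow w v.
Proof. intros (p & y & ->). exists (i :: p), y. rewrite <- app_assoc. reflexivity. Qed.

Lemma not_below_self w y : ~ Below w (inr (w, y)).
Proof.
  intros (i & p & y' & E). inversion E.
  assert (length w = length (w ++ i :: p)) by congruence. rewrite length_app in H. simpl in H. lia.
Qed.

Lemma atorbelow_disj w i i' v : AtOrBelow (w ++ [i]) v -> AtOrBelow (w ++ [i']) v -> i = i'.
Proof.
  intros (p & y & ->) (p' & y' & E). inversion E.
  rewrite <- !app_assoc in H0. apply app_inv_head in H0. simpl in H0. congruence.
Qed.

Lemma iconj_preds (psi : form S nat) : iconj psi -> preds psi = [] /\ compatoms psi = [] /\ compvars psi = [].
Proof. induction 1; simpl; auto. destruct IHiconj1 as (-> & -> & ->), IHiconj2 as (-> & -> & ->); auto. Qed.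

Lemma pconj_atoms (P : form S nat) : pconj P -> compatoms P = [] /\ compvars P = [] /\ intatoms P = [].
Proof. induction 1; simpl; auto. destruct IHpconj1 as (-> & -> & ->), IHpconj2 as (-> & -> & ->); auto. Qed.


Lemma node_props : forall t w sigma, rtree_ok D t -> subtree T w = Some t ->
  (forall x, In x (rparams (label t)) -> sT T (sigma x) = w ++ seps t x) ->
  (forall x, In x (rparams (label t)) -> ~ Below w (sigma x)) ->
  NodeProps t w sigma.
Proof.
  induction t as [r ch IH] using rtree_ind'.
  intros w sigma Hok Hsub Hsig Isig.
  inversion Hok as [r0 ch0 Hr Hlen Hhead Hch]; subst r0 ch0.
  simpl label in Hsig, Isig |- *.
  destruct HtD as (HtL & HtF & HtP).
  destruct HwfD as (Hwf & HwfL).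
  destruct (Hwf r Hr) as (Hnd & Hfv & HiL & Hsc).
  destruct (Hforms r Hr) as [FI|FII].
  -
    destruct FI as (C & q & x & Hp & Hb & Hs).
    assert (Hch0 : ch = []).
    { rewrite Hb in Hlen. simpl in Hlen. destruct ch; [auto|discriminate]. }
    subst ch.
    assert (Ex : rhoF r w sigma x = sigma x).
    { unfold rhoF. rewrite Hp. destruct (in_dec Nat.eq_dec x [x]) as [_|n]; auto. exfalso; apply n; simpl; auto. }
    assert (Ec : chi (Node r []) w sigma = CompQ C q (sigma x)).
    { rewrite chi_unfold, Hb. simpl. rewrite Ex. reflexivity. }
    assert (Hxp : In x (rparams r)) by (rewrite Hp; simpl; auto).
    unfold NodeProps. simpl label. rewrite Ec. simpl.
    split; [|split; [|split; [|split; [|split; [|split; [|split]]]]]].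
    + auto.
    + intros C0 q0 v [E|[]]. inversion E; subst; auto.
    + intros C0 q0 v [E|[]]. inversion E; subst. rewrite Hsig by auto. eauto.
    + intros C0 q0 v C1 q1 v1 [E|[]] [E1|[]] _. inversion E; inversion E1; subst; auto.
    + intros I vs [].
    + intros l z C1 Hl HC.
      destruct (HtP r l z Hr Hl) as (C2 & HC2 & [(q2 & Hq2)|(B & ys & l' & HB & _)]).
      * rewrite Hb in Hq2. simpl in Hq2. destruct Hq2 as [E|[]]. inversion E; subst.
        rewrite Hp in Hl. destruct l as [|[|l]]; simpl in Hl; inversion Hl; subst.
        rewrite HC in HC2. inversion HC2; subst. eauto.
      * rewrite Hb in HB. destruct HB.
    + intros v [<-|[]]. left. eauto.
    + intros v [].
  -
    destruct FII as (ys & ph & ps & P & Hb & Hphi & Hpsi & HP & Hnd' & Hpargs).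
    assert (Hpy : forall v, In v (rparams r) -> ~ In v ys).
    { intros v Hv. apply Hfv in Hv. rewrite Hb in Hv. eapply exs_fv; eauto. }
    set (rho1 := rhoW w ys (rhoF r w sigma)).
    assert (Hr1p : forall v, In v (rparams r) -> rho1 v = sigma v).
    { intros v Hv. unfold rho1, rhoW, rhoF.
      destruct (in_dec Nat.eq_dec v ys) as [i|_]; [exfalso; eapply Hpy; eauto|].
      destruct (in_dec Nat.eq_dec v (rparams r)); tauto. }
    assert (Hgood : forall v, sT T (rho1 v) = w ++ seps (Node r ch) v).
    { intros v. unfold rho1, rhoW, rhoF.
      destruct (in_dec Nat.eq_dec v ys); [simpl; rewrite Hsub; auto|].
      destruct (in_dec Nat.eq_dec v (rparams r)); [auto|simpl; rewrite Hsub; auto]. }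
    assert (Hnb : forall v, ~ Below w (rho1 v)).
    { intros v. unfold rho1, rhoW, rhoF.
      destruct (in_dec Nat.eq_dec v ys); [apply not_below_self|].
      destruct (in_dec Nat.eq_dec v (rparams r)); [auto|apply not_below_self]. }
    assert (Hval : forall v, (exists x, In x (rparams r) /\ rho1 v = sigma x) \/ AtOrBelow w (rho1 v)).
    { intros v. destruct (in_dec Nat.eq_dec v (rparams r)) as [i|n].
      - left. exists v. split; auto.
      - right. unfold rho1, rhoW, rhoF.
        destruct (in_dec Nat.eq_dec v ys); [exists [], v; rewrite app_nil_r; auto|].
        destruct (in_dec Nat.eq_dec v (rparams r)); [tauto|exists [], v; rewrite app_nil_r; auto]. }
    destruct (iconj_preds Hpsi) as (Pp & Cp & CVp).
    destruct (pconj_atoms HP) as (CP & CVP & IP).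
    assert (Hpreds : preds (rbody r) = preds P).
    { rewrite Hb, exs_preds. simpl. rewrite Pp. destruct Hphi as [->|(C & q & x1 & rest & _ & -> & _)]; reflexivity. }
    assert (Hcatb : compatoms (rbody r) = compatoms ph /\ compvars (rbody r) = compvars ph /\ intatoms (rbody r) = intatoms ps).
    { rewrite Hb, exs_catoms, exs_cvars, exs_iatoms. simpl. rewrite Cp, CVp, CP, CVP, IP.
      destruct Hphi as [->|(C & q & x1 & rest & _ & -> & _)]; simpl; rewrite ?app_nil_r; auto. }
    destruct Hcatb as (Hcatb & Hcvb & Hiab).
    set (FFc := FF ch w).
    assert (Hph : snd (inst w FFc rho1 ph 0) = 0 /\ okF (fst (inst w FFc rho1 ph 0)) /\
       bvs (fst (inst w FFc rho1 ph 0)) = [] /\ intatoms (fst (inst w FFc rho1 ph 0)) = [] /\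
       (forall a, In a (compatoms (fst (inst w FFc rho1 ph 0))) <->
          exists C q x, In (C,q,x) (compatoms ph) /\ a = (C,q,rho1 x)) /\
       (forall v, In v (avars (fst (inst w FFc rho1 ph 0))) -> exists x, v = rho1 x)).
    { destruct Hphi as [->|(C & q & x1 & rest & _ & -> & _)]; simpl.
      - repeat split; auto; try tauto. intros (C & q & x & [] & _).
      - repeat split; auto.
        + intros [<-|[]]. exists C, q, x1; auto.
        + intros (C0 & q0 & x & [E|[]] & ->). inversion E; auto.
        + intros v [<-|[]]. eauto. }
    destruct Hph as (Sph & Oph & Bph & Iph & Cph & Aph).
    destruct (inst_iconj w FFc Hpsi rho1 0) as (Sps & Cps & Bps & Ops & Ips & Aps).
    assert (Echi : chi (Node r ch) w sigma = exsV w ys (Sep (fst (inst w FFc rho1 ph 0))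
        (Sep (fst (inst w FFc rho1 ps 0)) (fst (inst w FFc rho1 P 0))))).
    { rewrite chi_unfold, Hb, inst_exs. fold FFc. fold rho1. simpl fst at 1. f_equal.
      revert Sph Sps. destruct (inst w FFc rho1 ph 0) as [a0 n0]; simpl; intros ->.
      destruct (inst w FFc rho1 ps 0) as [a1 n1]; simpl; intros ->.
      destruct (inst w FFc rho1 P 0); reflexivity. }
    assert (Hx1 : forall x, In x (pargs P) -> ~ In x (compvars ph)).
    { intros x Hx Hc. destruct Hphi as [->|(C & q & x1 & rest & Hp & -> & _)]; [destruct Hc|].
      destruct Hc as [<-|[]]. apply Hpargs in Hx. destruct Hx as [[_ Hn]|Hy].
      - apply Hn. simpl; auto.
      - apply (Hpy x1); auto. rewrite Hp; simpl; auto. }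
    assert (Hchild : forall i A xs, nth_error (preds P) i = Some (A,xs) ->
      exists c, nth_error ch i = Some c /\ rhead (label c) = A /\
        (forall j z, nth_error (rparams (label c)) j = Some z ->
           exists x, nth_error xs j = Some x /\ sigK (rparams (label c)) w i (map rho1 xs) z = rho1 x) /\
        NodeProps c (w ++ [Datatypes.S i]) (sigK (rparams (label c)) w i (map rho1 xs))).
    { intros i A xs Hi.
      assert (Hi' : nth_error (preds (rbody r)) i = Some (A,xs)) by (rewrite Hpreds; auto).
      destruct (nth_error ch i) as [c|] eqn:Hc.
      2:{ exfalso. apply nth_error_None in Hc. assert (i < length (preds (rbody r))) by (apply nth_error_Some; congruence). lia. }
      exists c. split; auto.
      assert (Hhc : rhead (label c) = A) by (eapply Hhead; eauto).
      split; auto.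
      assert (Hcin : In c ch) by (eapply nth_error_In; eauto).
      assert (Hokc := Hch c Hcin).
      assert (Hlc : In (label c) D) by (inversion Hokc; subst; simpl; auto).
      destruct (Hwf (label c) Hlc) as (Hndc & _).
      assert (Hlen' : length xs = length (rparams (label c))).
      { apply (HwfL r (label c) A xs); auto. eapply nth_error_In; eauto. }
      assert (Hlk : forall j z, nth_error (rparams (label c)) j = Some z ->
           exists x, nth_error xs j = Some x /\ sigK (rparams (label c)) w i (map rho1 xs) z = rho1 x).
      { intros j z Hj. destruct (nth_error xs j) as [x|] eqn:Hxj.
        - exists x. split; auto. unfold sigK. erewrite lookup_nth; [| exact Hndc | rewrite length_map; auto | exact Hj].
          rewrite nth_error_map, Hxj. reflexivity.
        - exfalso. apply nth_error_None in Hxj. assert (j < length (rparams (label c))) by (apply nth_error_Some; congruence). lia. }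
      split; auto.
      apply IH; auto.
      - rewrite (subtree_app T w [Datatypes.S i] Hsub). simpl. rewrite Hc. reflexivity.
      - intros z Hz. destruct (In_nth_error _ _ Hz) as [j Hj].
        destruct (Hlk j z Hj) as (x & Hxj & ->). rewrite Hgood.
        rewrite seps_unfold. rewrite Hcvb.
        assert (Hxp : In x (pargs P)).
        { unfold pargs. apply in_concat. exists xs. split. apply in_map_iff. exists (A,xs). split; auto.
          eapply nth_error_In; eauto. eapply nth_error_In; eauto. }
        destruct (in_dec Nat.eq_dec x (compvars ph)) as [Hin|_]; [exfalso; eapply Hx1; eauto|].
        rewrite Hpreds. rewrite (@find_arg_nth S (preds P) Hnd' i A xs j x Hi Hxj). rewrite Hc.
        rewrite (nth_error_nth _ _ _ Hj). rewrite <- app_assoc. reflexivity.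
      - intros z Hz Hbl. destruct (In_nth_error _ _ Hz) as [j Hj].
        destruct (Hlk j z Hj) as (x & Hxj & E). rewrite E in Hbl.
        apply (Hnb x). eapply below_ext; eauto. }
    set (ph' := fst (inst w FFc rho1 ph 0)) in *.
    set (ps' := fst (inst w FFc rho1 ps 0)) in *.
    set (P' := fst (inst w FFc rho1 P 0)) in *.
    assert (Hcol : forall (X : Type) (col : form S var' -> list X),
      (forall a b, col (Sep a b) = col a ++ col b) ->
      forall x, In x (col P') <-> exists i A xs, nth_error (preds P) i = Some (A,xs) /\ In x (col (FFc i (map rho1 xs)))).
    { intros X col Hc x. exact (proj2 (inst_pconj_col col Hc w FFc HP rho1 0) x). }
    assert (ChildF : forall i A xs, nth_error (preds P) i = Some (A,xs) ->
      exists c, FFc i (map rho1 xs) = chi c (w ++ [Datatypes.S i]) (sigK (rparams (label c)) w i (map rho1 xs)) /\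
        nth_error ch i = Some c /\ rhead (label c) = A /\
        (forall j z, nth_error (rparams (label c)) j = Some z ->
           exists x, nth_error xs j = Some x /\ sigK (rparams (label c)) w i (map rho1 xs) z = rho1 x) /\
        NodeProps c (w ++ [Datatypes.S i]) (sigK (rparams (label c)) w i (map rho1 xs))).
    { intros i A xs Hi. destruct (Hchild i A xs Hi) as (c & Hc & Hh & Hlk & NP).
      exists c. split; auto. unfold FFc. apply FF_nth; auto. }
    assert (AvC : forall i A xs v, nth_error (preds P) i = Some (A,xs) -> In v (avars (FFc i (map rho1 xs))) ->
       (exists x, v = rho1 x) \/ AtOrBelow (w ++ [Datatypes.S i]) v).
    { intros i A xs v Hi Hv. destruct (ChildF i A xs Hi) as (c & E & Hc & Hh & Hlk & NP).
      rewrite E in Hv. destruct NP as (_ & _ & _ & _ & _ & _ & cA & _).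
      destruct (cA v Hv) as [(z & Hz & ->)|Hb']; auto. left.
      destruct (In_nth_error _ _ Hz) as [j Hj]. destruct (Hlk j z Hj) as (x & _ & E'). eauto. }
    assert (BvC : forall i A xs v, nth_error (preds P) i = Some (A,xs) -> In v (bvs (FFc i (map rho1 xs))) ->
       AtOrBelow (w ++ [Datatypes.S i]) v).
    { intros i A xs v Hi Hv. destruct (ChildF i A xs Hi) as (c & E & Hc & Hh & Hlk & NP).
      rewrite E in Hv. destruct NP as (_ & _ & _ & _ & _ & _ & _ & cB). auto. }
    assert (AvP : forall v, In v (avars P') -> (exists x, v = rho1 x) \/ exists i, AtOrBelow (w ++ [Datatypes.S i]) v).
    { intros v Hv. apply (Hcol _ (@avars S var') (fun a b => eq_refl)) in Hv.
      destruct Hv as (i & A & xs & Hi & Hv). destruct (AvC i A xs v Hi Hv); eauto. }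
    assert (BvP : forall v, In v (bvs P') -> exists i, AtOrBelow (w ++ [Datatypes.S i]) v).
    { intros v Hv. apply (Hcol _ (@bvs S var') (fun a b => eq_refl)) in Hv.
      destruct Hv as (i & A & xs & Hi & Hv). eauto. }
    assert (CatP : forall a, In a (compatoms P') -> exists i A xs c, nth_error (preds P) i = Some (A,xs) /\
        nth_error ch i = Some c /\
        In a (compatoms (chi c (w ++ [Datatypes.S i]) (sigK (rparams (label c)) w i (map rho1 xs)))) /\
        NodeProps c (w ++ [Datatypes.S i]) (sigK (rparams (label c)) w i (map rho1 xs))).
    { intros a Ha. apply (Hcol _ (@compatoms S var') (fun a b => eq_refl)) in Ha.
      destruct Ha as (i & A & xs & Hi & Ha). destruct (ChildF i A xs Hi) as (c & E & Hc & Hh & Hlk & NP).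
      rewrite E in Ha. exists i, A, xs, c. auto. }
    assert (CatP' : forall i A xs c a, nth_error (preds P) i = Some (A,xs) -> nth_error ch i = Some c ->
        In a (compatoms (chi c (w ++ [Datatypes.S i]) (sigK (rparams (label c)) w i (map rho1 xs)))) ->
        In a (compatoms P')).
    { intros i A xs c a Hi Hc Ha. apply (Hcol _ (@compatoms S var') (fun a b => eq_refl)).
      exists i, A, xs. split; auto. unfold FFc. erewrite FF_nth; [exact Ha|exact Hc]. }
    assert (IatP : forall a, In a (intatoms P') -> exists i A xs c, nth_error (preds P) i = Some (A,xs) /\
        nth_error ch i = Some c /\
        In a (intatoms (chi c (w ++ [Datatypes.S i]) (sigK (rparams (label c)) w i (map rho1 xs)))) /\
        NodeProps c (w ++ [Datatypes.S i]) (sigK (rparams (label c)) w i (map rho1 xs))).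
    { intros a Ha. apply (Hcol _ (@intatoms S var') (fun a b => eq_refl)) in Ha.
      destruct Ha as (i & A & xs & Hi & Ha). destruct (ChildF i A xs Hi) as (c & E & Hc & Hh & Hlk & NP).
      rewrite E in Ha. exists i, A, xs, c. auto. }
    assert (Hpa : forall A xs l x C, In (A,xs) (preds P) -> nth_error xs l = Some x ->
        nth_error (lam A) l = Some C -> exists q, In (C,q,rho1 x) (compatoms P')).
    { intros A xs l x C HA Hl HC. destruct (In_nth_error _ _ HA) as [i Hi].
      destruct (ChildF i A xs Hi) as (c & E & Hc & Hh & Hlk & NP).
      assert (Hlc : In (label c) D).
      { assert (Hokc := Hch c (nth_error_In _ _ Hc)). inversion Hokc; subst; simpl; auto. }
      assert (Hlen' : length xs = length (rparams (label c))).
      { apply (HwfL r (label c) A xs); auto. rewrite Hpreds; auto. }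
      destruct (nth_error (rparams (label c)) l) as [z|] eqn:Hz.
      2:{ exfalso. apply nth_error_None in Hz. assert (l < length xs) by (apply nth_error_Some; congruence). lia. }
      destruct (Hlk l z Hz) as (x' & Hx' & Ez). rewrite Hl in Hx'. inversion Hx'; subst x'.
      destruct NP as (_ & _ & _ & _ & _ & cN & _).
      rewrite Hh in cN. destruct (cN l z C Hz HC) as [q Hq]. exists q. rewrite <- Ez. eapply CatP'; eauto. }
    assert (Hphx : forall C q x, In (C,q,x) (compatoms ph) -> sT T (rho1 x) = w).
    { intros C q x Hx. rewrite Hgood, seps_unfold, Hcvb.
      destruct (in_dec Nat.eq_dec x (compvars ph)) as [_|n]; [apply app_nil_r|].
      exfalso. apply n. destruct Hphi as [->|(C0 & q0 & x1 & rest & _ & -> & _)]; [destruct Hx|].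
      destruct Hx as [E|[]]; inversion E; subst; simpl; auto. }
    unfold NodeProps. simpl label. rewrite Echi, exsV_catoms, exsV_iatoms, exsV_avars, exsV_bvs, exsV_ok.
    cbn [compatoms intatoms avars bvs okF]. rewrite Cps, Iph, Bph, Bps. simpl app.
    split; [|split; [|split; [|split; [|split; [|split; [|split]]]]]].
    +
      split; [auto|]. split; [split; [auto|split]|split].
      * apply inst_pconj_ok; auto.
        -- intros i A xs Hi. destruct (ChildF i A xs Hi) as (c & E & _ & _ & _ & NP).
           simpl. rewrite E. destruct NP; auto.
        -- intros i A xs i' A' xs' v Hne Hi Hi' Hv Hb'. simpl in Hv, Hb'.
           apply (BvC i' A' xs' v Hi') in Hb'.
           destruct (AvC i A xs v Hi Hv) as [(x & ->)|Ha].
           ++ apply (Hnb x). eapply atorbelow_below; eauto.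
           ++ apply Hne. assert (E := atorbelow_disj _ _ _ Ha Hb'). congruence.
      * split.
        -- intros v Hv Hb'. destruct (Aps v Hv) as [x ->]. destruct (BvP _ Hb') as [i Hi].
           apply (Hnb x). eapply atorbelow_below; eauto.
        -- intros v _ [].
      * intros v Hv Hb'. destruct (Aph v Hv) as [x ->]. destruct (BvP _ Hb') as [i Hi].
        apply (Hnb x). eapply atorbelow_below; eauto.
      * intros v _ [].
    +
      intros C q v Hv. apply in_app_or in Hv. destruct Hv as [Hv|Hv].
      * apply Cph in Hv. destruct Hv as (C0 & q0 & x & Hx & E). inversion E; subst.
        eapply Hsc. rewrite Hcatb; eauto.
      * destruct (CatP _ Hv) as (i & A & xs & c & _ & _ & Ha & NP). destruct NP as (_ & cS & _). eauto.
    +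
      intros C q v Hv. apply in_app_or in Hv. destruct Hv as [Hv|Hv].
      * apply Cph in Hv. destruct Hv as (C0 & q0 & x & Hx & E). inversion E; subst.
        exists []. rewrite app_nil_r. eapply Hphx; eauto.
      * destruct (CatP _ Hv) as (i & A & xs & c & _ & _ & Ha & NP). destruct NP as (_ & _ & cP & _).
        destruct (cP _ _ _ Ha) as [p ->]. exists (Datatypes.S i :: p). rewrite <- app_assoc. reflexivity.
    +
      intros C q v C' q' v' Hv Hv' E.
      apply in_app_or in Hv. apply in_app_or in Hv'.
      destruct Hv as [Hv|Hv]; destruct Hv' as [Hv'|Hv'].
      * apply Cph in Hv. apply Cph in Hv'.
        destruct Hv as (C0 & q0 & x & Hx & E1). destruct Hv' as (C1 & q1 & x' & Hx' & E2).
        inversion E1; inversion E2; subst.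
        destruct Hphi as [->|(C2 & q2 & x1 & rest & _ & -> & _)]; [destruct Hx|].
        destruct Hx as [Ea|[]]; destruct Hx' as [Eb|[]]. inversion Ea; inversion Eb; subst; auto.
      * apply Cph in Hv. destruct Hv as (C0 & q0 & x & Hx & E1). inversion E1; subst.
        rewrite (Hphx _ _ _ Hx) in E.
        destruct (CatP _ Hv') as (i & A & xs & c & _ & _ & Ha & NP). destruct NP as (_ & _ & cP & _).
        destruct (cP _ _ _ Ha) as [p Ep]. rewrite Ep in E.
        exfalso. assert (length w = length ((w ++ [Datatypes.S i]) ++ p)) by congruence.
        rewrite !length_app in H. simpl in H. lia.
      * apply Cph in Hv'. destruct Hv' as (C0 & q0 & x & Hx & E1). inversion E1; subst.
        rewrite (Hphx _ _ _ Hx) in E.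
        destruct (CatP _ Hv) as (i & A & xs & c & _ & _ & Ha & NP). destruct NP as (_ & _ & cP & _).
        destruct (cP _ _ _ Ha) as [p Ep]. rewrite Ep in E.
        exfalso. assert (length w = length ((w ++ [Datatypes.S i]) ++ p)) by congruence.
        rewrite !length_app in H. simpl in H. lia.
      * destruct (CatP _ Hv) as (i & A & xs & c & Hi & Hc & Ha & NP).
        destruct (CatP _ Hv') as (i' & A' & xs' & c' & Hi' & Hc' & Ha' & NP').
        destruct NP as (_ & _ & cP & cI & _). destruct NP' as (_ & _ & cP' & _).
        destruct (cP _ _ _ Ha) as [p Ep]. destruct (cP' _ _ _ Ha') as [p' Ep'].
        assert (i = i').
        { rewrite Ep, Ep' in E. rewrite <- !app_assoc in E. apply app_inv_head in E. simpl in E. congruence. }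
        subst i'. rewrite Hi in Hi'. inversion Hi'; subst. rewrite Hc in Hc'. inversion Hc'; subst.
        eapply cI; eauto.
    +
      intros I vs Hv. apply in_app_or in Hv. destruct Hv as [Hv|Hv].
      * apply Ips in Hv. destruct Hv as (I0 & xs & Hxs & E). inversion E; subst I0 vs.
        assert (Hxb : In (I,xs) (intatoms (rbody r))) by (rewrite Hiab; auto).
        split. rewrite length_map. apply HiL; auto.
        intros j v p Hj Hp. rewrite nth_error_map in Hj.
        destruct (nth_error xs j) as [x|] eqn:Hx; [|discriminate]. simpl in Hj. inversion Hj; subst v.
        destruct (HtF r Hr I xs j x p Hxb Hx Hp) as [(C & q & Hq & Hpc)|(A & ys' & l & C & HA & Hl & HC & Hpc)].
        -- exists q. apply in_or_app. left. apply Cph. exists C, q, x. rewrite Hcatb in Hq. rewrite Hpc. auto.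
        -- rewrite Hpreds in HA. destruct (Hpa A ys' l x C HA Hl HC) as [q Hq].
           exists q. apply in_or_app. right. rewrite Hpc. auto.
      * destruct (IatP _ Hv) as (i & A & xs & c & Hi & Hc & Ha & NP).
        destruct NP as (_ & _ & _ & _ & cT & _).
        destruct (cT _ _ Ha) as [Hl Hj]. split; auto.
        intros j v p Hjv Hp. destruct (Hj j v p Hjv Hp) as [q Hq]. exists q.
        apply in_or_app. right. eapply CatP'; eauto.
    +
      intros l z C Hl HC.
      destruct (HtP r l z Hr Hl) as (C2 & HC2 & [(q2 & Hq2)|(B & ys' & l' & HB & Hl' & HCB)]).
      * rewrite HC in HC2. inversion HC2; subst C2. exists q2. apply in_or_app. left. apply Cph.
        exists C, q2, z. rewrite Hcatb in Hq2. split; auto. rewrite Hr1p; auto.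
        eapply nth_error_In; eauto.
      * rewrite HC in HC2. inversion HC2; subst C2. rewrite Hpreds in HB.
        destruct (Hpa B ys' l' z C HB Hl' HCB) as [q Hq]. exists q. apply in_or_app. right.
        rewrite <- Hr1p; auto. eapply nth_error_In; eauto.
    +
      intros v Hv. apply in_app_or in Hv. destruct Hv as [Hv|Hv].
      * destruct (Aph v Hv) as [x ->]. destruct (Hval x) as [(x' & Hx' & E)|Hb']; auto.
      * apply in_app_or in Hv. destruct Hv as [Hv|Hv].
        -- destruct (Aps v Hv) as [x ->]. destruct (Hval x) as [(x' & Hx' & E)|Hb']; auto.
        -- destruct (AvP v Hv) as [(x & ->)|(i & Hb')].
           ++ destruct (Hval x) as [(x' & Hx' & E)|Hb']; auto.
           ++ right. eapply atorbelow_ext; eauto.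
    +
      intros v Hv. apply in_app_or in Hv. destruct Hv as [Hv|Hv].
      * apply in_map_iff in Hv. destruct Hv as (y & <- & _). exists [], y. rewrite app_nil_r; auto.
      * destruct (BvP v Hv) as [i Hb']. eapply atorbelow_ext; eauto.
Qed.

End Main.


Lemma map_tuple_eq (S : sig) (f : CT S -> U -> U) (g h : var' -> U) (ports : list (Port S)) :
  forall vs, length vs = length ports ->
  (forall j v p, nth_error vs j = Some v -> nth_error ports j = Some p -> f (pcomp p) (g v) = h v) ->
  map_tuple f ports (map g vs) = map h vs.
Proof.
  induction ports as [|p ports IH]; intros vs Hl H.
  - destruct vs; [reflexivity|discriminate].
  - destruct vs as [|v vs]; [discriminate|]. simpl. f_equal.
    + apply (H 0 v p); reflexivity.
    + apply IH. simpl in Hl; lia. intros j v' p' H1 H2. apply (H (Datatypes.S j)); auto.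
Qed.

Theorem mainTheorem8 (S : sig) (D : list (rule S)) (lam : profile S)
  (Aphi : Pred S) (phi : form S nat) :
  wf_SID D ->
  tight_SID D lam ->
  (forall r, In r D -> form_I r \/ form_II r) ->
  In (mkRule Aphi [] phi) D ->
  fv phi = [] ->
  tight_form lam phi ->
  forall T : rtree S, in_R D (mkRule Aphi [] phi) T ->
  forall c : config S,
    (exists s : var' -> U, sat D (@vdec) s c (chiT T)) ->
    symmetric c (canon T).
Proof.
  intros HwfD HtD Hforms Hin0 Hfv0 Htf0 T [HokT HlT] c [s Hsat].
  assert (NP : NodeProps lam T T [] inl).
  { apply (node_props T HwfD HtD Hforms); auto; intros x Hx; rewrite HlT in Hx; destruct Hx. }
  destruct NP as (O & Sc & _ & Inj & Tg & _ & _ & _).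
  change (chi T [] inl) with (chiT T) in *.
  destruct (sat_desc Hsat O) as (g & _ & (DC & DI & DM & DJ)).
  assert (Hbij : forall C, exists h hi : U -> U, (forall u, hi (h u) = u) /\ (forall u, h (hi u) = u) /\
     (forall x, In x (compatoms (chiT T)) -> fst (fst x) = C -> h (g (snd x)) = sT T (snd x))).
  { intros C. apply (ext_bij (compatoms (chiT T)) (fun x => fst (fst x) = C)
       (fun x => g (snd x)) (fun x => sT T (snd x))).
    intros [[C1 q1] v1] [[C2 q2] v2] H1 H2 E1 E2. simpl in E1, E2 |- *. subst. split; intros E.
    - rewrite (DJ C q1 v1 q2 v2 H1 H2 E). reflexivity.
    - rewrite (Inj C q1 v1 C q2 v2 H1 H2 E). reflexivity. }
  set (f := fun C => proj1_sig (constructive_indefinite_description _ (Hbij C))).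
  assert (Hfb : bij_family f).
  { intros C. unfold f. destruct (constructive_indefinite_description _ (Hbij C)) as [h (hi & H1 & H2 & H3)].
    simpl. exists hi. auto. }
  assert (Hfv : forall C q v, In (C,q,v) (compatoms (chiT T)) -> f C (g v) = sT T v).
  { intros C q v Hv. unfold f. destruct (constructive_indefinite_description _ (Hbij C)) as [h (hi & H1 & H2 & H3)].
    simpl. apply (H3 (C,q,v)); auto. }
  exists f. split; [exact Hfb|]. split; [|split].
  - intros C u. simpl. split.
    + intros (q & v & Hv & <-). exists (g v). split; [apply DC; eauto|]. eapply Hfv; eauto.
    + intros (v0 & Hc & <-). apply DC in Hc. destruct Hc as (q & v & Hv & <-). exists q, v. split; auto.
      symmetry. eapply Hfv; eauto.
  - intros I t. simpl. split.
    + intros (vs & Hv & <-). exists (map g vs). split; [apply DI; eauto|].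
      destruct (Tg I vs Hv) as [Hl Hj]. apply map_tuple_eq; auto.
      intros j v p Hjv Hp. destruct (Hj j v p Hjv Hp) as [q Hq]. eapply Hfv; eauto.
    + intros (t' & Hc & <-). apply DI in Hc. destruct Hc as (vs & Hv & <-). exists vs. split; auto.
      destruct (Tg I vs Hv) as [Hl Hj]. symmetry. apply map_tuple_eq; auto.
      intros j v p Hjv Hp. destruct (Hj j v p Hjv Hp) as [q Hq]. eapply Hfv; eauto.
  - intros q u. simpl. split.
    + intros (C & v & Hv & <-). exists (g v). split; [apply DM; eauto|].
      rewrite (Sc C q v Hv). eapply Hfv; eauto.
    + intros (v0 & Hc & <-). apply DM in Hc. destruct Hc as (C & v & Hv & <-). exists C, v. split; auto.
      rewrite (Sc C q v Hv). symmetry. eapply Hfv; eauto.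
Qed.
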